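(* Let $\lambda_0\in\mathbb{C}$ and let $L(\lambda)$ be a matrix pencil of the block upper triangular form \[ L(\lambda)=\begin{bmatrix} L_\ell(\lambda) & A(\lambda) & B(\lambda)\\ 0 & R(\lambda) & C(\lambda)\\ 0 & 0 & L_r(\lambda)\end{bmatrix}, \] where $L_\ell(\lambda)$ is right invertible over $\mathbb{C}[\lambda]$, $L_r(\lambda)$ has no eigenvalues at $\lambda_0$ and has no right minimal indices, and $R(\lambda)$ is regular and has only eigenvalues at $\lambda_0$. Then $\{v_i(\lambda)\}_{i=1}^s$ is a maximal set of root polynomials for $R(\lambda)$ at $\lambda_0$ of orders $\ell_1,\dots,\ell_s$ if and only if a maximal set of root polynomials (of the same orders) for $L(\lambda)$ at $\lambda_0$ has the form $\{q_i(\lambda)\}_{i=1}^s$ where \[ q_i(\lambda)=\begin{bmatrix} u_i(\lambda)\\ v_i(\lambda)\\ 0\end{bmatrix}+(\lambda-\lambda_0)^{\ell_i} r_i(\lambda),\qquad i=1,\dots,s, \] for some polynomial vectors $u_i(\lambda)$, $r_i(\lambda)$.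
   Context: A polynomial matrix $A(\lambda)$ is right invertible over $\mathbb{C}[\lambda]$ if there is a polynomial $A(\lambda)^R$ with $A(\lambda)A(\lambda)^R=I$. Let the columns of $N(\lambda)$ be a right minimal basis of $P(\lambda)$. A root polynomial of order $k$ at $\lambda_0$ is a polynomial $x(\lambda)$ with $x(\lambda_0)\neq0$, $P(\lambda)x(\lambda)=(\lambda-\lambda_0)^k v(\lambda)$, $v(\lambda_0)\ne0$, and $[N(\lambda_0)\ x(\lambda_0)]$ of full column rank. A set $\{r_1,\dots,r_s\}$ of root polynomials is $\lambda_0$-independent if $[N(\lambda_0)\ r_1(\lambda_0)\cdots r_s(\lambda_0)]$ has full column rank; it is complete if no larger $\lambda_0$-independent set exists; a complete set ordered by decreasing orders $k_1\ge\dots\ge k_s>0$ is maximal if for no $j$ there is a root polynomial $\tilde r$ of order $>k_j$ with $[N(\lambda_0)\ r_1(\lambda_0)\cdots r_{j-1}(\lambda_0)\ \tilde r(\lambda_0)]$ of full column rank. *)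

(* Defs.v *)
From HB Require Import structures.
From mathcomp Require Import all_boot all_order all_algebra.
From mathcomp Require Export fraction.
From mathcomp Require Export complex.
From mathcomp Require Export reals.

Set Implicit Arguments.
Unset Strict Implicit.
Unset Printing Implicit Defensive.

Import GRing.Theory.
Local Open Scope ring_scope.

Section PolyMatrixDefs.
Variable F : fieldType.

Definition evalmx (m n : nat) (M : 'M[{poly F}]_(m, n)) (mu : F) : 'M[F]_(m, n) :=
  map_mx (fun p => p.[mu]) M.

Definition fracmx (m n : nat) (M : 'M[{poly F}]_(m, n)) : 'M[{fraction {poly F}}]_(m, n) :=
  map_mx (@FracField.tofrac [the idomainType of {poly F}]) M.

Definition nrank (m n : nat) (M : 'M[{poly F}]_(m, n)) : nat := \rank (fracmx M).

(* matrix pencil: every entry has degree <= 1 *)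
Definition is_pencil (m n : nat) (M : 'M[{poly F}]_(m, n)) : Prop :=
  forall i j, (size (M i j) <= 2)%N.

Definition right_invertible (m n : nat) (M : 'M[{poly F}]_(m, n)) : Prop :=
  exists X : 'M[{poly F}]_(n, m), M *m X = 1%:M.

Definition pregular (n : nat) (M : 'M[{poly F}]_n) : Prop := \det M != 0.

Definition peigenvalue (m n : nat) (M : 'M[{poly F}]_(m, n)) (mu : F) : Prop :=
  (\rank (evalmx M mu) < nrank M)%N.

Definition coldeg (n p : nat) (N : 'M[{poly F}]_(n, p)) (j : 'I_p) : nat :=
  (\max_(i < n) size (N i j)).-1.

(* the columns of N are a polynomial basis of the right null space of P over F(lambda) *)
Definition poly_null_basis (m n p : nat) (P : 'M[{poly F}]_(m, n)) (N : 'M[{poly F}]_(n, p)) : Prop :=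
  [/\ P *m N = 0, nrank N = p & p = (n - nrank P)%N].

Definition right_minimal_basis (m n p : nat) (P : 'M[{poly F}]_(m, n)) (N : 'M[{poly F}]_(n, p)) : Prop :=
  poly_null_basis P N /\
  forall N' : 'M[{poly F}]_(n, p), poly_null_basis P N' ->
    (\sum_(j < p) coldeg N j <= \sum_(j < p) coldeg N' j)%N.

Definition root_poly (m n p : nat) (P : 'M[{poly F}]_(m, n)) (N : 'M[{poly F}]_(n, p))
    (mu : F) (x : 'cV[{poly F}]_n) (k : nat) : Prop :=
  [/\ (0 < k)%N,
      evalmx x mu != 0,
      (exists2 v : 'cV[{poly F}]_m, P *m x = ('X - mu%:P) ^+ k *: v & evalmx v mu != 0)
    & \rank (row_mx (evalmx N mu) (evalmx x mu)) = (p + 1)%N].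

Definition colsmx (n s : nat) (r : 'I_s -> 'cV[{poly F}]_n) : 'M[{poly F}]_(n, s) :=
  \matrix_(i < n, j < s) r j i ord0.

Definition indep_at (n p s : nat) (N : 'M[{poly F}]_(n, p)) (mu : F)
    (r : 'I_s -> 'cV[{poly F}]_n) : Prop :=
  \rank (row_mx (evalmx N mu) (evalmx (colsmx r) mu)) = (p + s)%N.

Definition root_set (m n p s : nat) (P : 'M[{poly F}]_(m, n)) (N : 'M[{poly F}]_(n, p))
    (mu : F) (r : 'I_s -> 'cV[{poly F}]_n) (k : 'I_s -> nat) : Prop :=
  (forall i, root_poly P N mu (r i) (k i)) /\ indep_at N mu r.

Definition complete_set (m n p s : nat) (P : 'M[{poly F}]_(m, n)) (N : 'M[{poly F}]_(n, p))
    (mu : F) (r : 'I_s -> 'cV[{poly F}]_n) (k : 'I_s -> nat) : Prop :=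
  root_set P N mu r k /\
  forall (t : nat) (r' : 'I_t -> 'cV[{poly F}]_n) (k' : 'I_t -> nat),
    root_set P N mu r' k' -> (t <= s)%N.

(* maximal: complete, orders non-increasing, and for no j (0-based) is there a root
   polynomial x of order > k_j with [N(mu) r_0(mu) ... r_{j-1}(mu) x(mu)] of full column rank *)
Definition maximal_set (m n p s : nat) (P : 'M[{poly F}]_(m, n)) (N : 'M[{poly F}]_(n, p))
    (mu : F) (r : 'I_s -> 'cV[{poly F}]_n) (k : 'I_s -> nat) : Prop :=
  [/\ complete_set P N mu r k,
      (forall i j : 'I_s, (i <= j)%N -> (k j <= k i)%N)
    & forall (j : 'I_s) (x : 'cV[{poly F}]_n) (kx : nat),
        root_poly P N mu x kx -> (k j < kx)%N ->
        \rank (row_mx (row_mx (evalmx N mu)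
                 (evalmx (colsmx (fun l : 'I_j => r (widen_ord (ltnW (ltn_ord j)) l))) mu))
                 (evalmx x mu)) <> (p + j + 1)%N].

End PolyMatrixDefs.

(* Main.v *)
Require Import Defs.
From HB Require Import structures.
From mathcomp Require Import all_boot all_order all_algebra.
From mathcomp Require Import fraction complex reals.
From Stdlib Require Import Classical IndefiniteDescription FunctionalExtensionality.
Set Implicit Arguments.
Unset Strict Implicit.
Unset Printing Implicit Defensive.
Import GRing.Theory.
Local Open Scope ring_scope.

Section Basics.
Variable F : fieldType.
Implicit Types (mu : F).

Lemma evalmxM mu m n p (A : 'M[{poly F}]_(m, n)) (B : 'M_(n, p)) :
  evalmx (A *m B) mu = evalmx A mu *m evalmx B mu.
Proof. exact: (map_mxM (horner_eval mu)). Qed.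

Lemma evalmxD mu m n (A B : 'M[{poly F}]_(m, n)) :
  evalmx (A + B) mu = evalmx A mu + evalmx B mu.
Proof. exact: (map_mxD (horner_eval mu)). Qed.

Lemma evalmxN mu m n (A : 'M[{poly F}]_(m, n)) :
  evalmx (- A) mu = - evalmx A mu.
Proof. exact: (map_mxN (horner_eval mu)). Qed.

Lemma evalmx0 mu m n : evalmx (0 : 'M[{poly F}]_(m, n)) mu = 0.
Proof. by apply/matrixP=> i j; rewrite !mxE horner0. Qed.

Lemma evalmx1 mu n : evalmx (1%:M : 'M[{poly F}]_n) mu = 1%:M.
Proof. by apply/matrixP=> i j; rewrite !mxE; case: (i == j); rewrite /= ?hornerC. Qed.

Lemma evalmxZ mu m n a (A : 'M[{poly F}]_(m, n)) :
  evalmx (a *: A) mu = a.[mu] *: evalmx A mu.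
Proof. by apply/matrixP=> i j; rewrite !mxE hornerM. Qed.

Lemma evalmx_col mu m1 m2 n (A : 'M[{poly F}]_(m1, n)) (B : 'M_(m2, n)) :
  evalmx (col_mx A B) mu = col_mx (evalmx A mu) (evalmx B mu).
Proof. exact: map_col_mx. Qed.

Lemma evalmx_row mu m n1 n2 (A : 'M[{poly F}]_(m, n1)) (B : 'M_(m, n2)) :
  evalmx (row_mx A B) mu = row_mx (evalmx A mu) (evalmx B mu).
Proof. exact: map_row_mx. Qed.

Lemma evalmx_block mu m1 m2 n1 n2 (A : 'M[{poly F}]_(m1, n1)) (B : 'M_(m1, n2))
  (C : 'M_(m2, n1)) (D : 'M_(m2, n2)) :
  evalmx (block_mx A B C D) mu = block_mx (evalmx A mu) (evalmx B mu) (evalmx C mu) (evalmx D mu).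
Proof. exact: map_block_mx. Qed.

Lemma evalmxC mu m n (X : 'M[F]_(m, n)) : evalmx (map_mx polyC X) mu = X.
Proof. by apply/matrixP=> i j; rewrite !mxE hornerC. Qed.

Lemma evalmx_usub mu m1 m2 n (A : 'M[{poly F}]_(m1 + m2, n)) :
  evalmx (usubmx A) mu = usubmx (evalmx A mu).
Proof. exact: map_usubmx. Qed.
Lemma evalmx_dsub mu m1 m2 n (A : 'M[{poly F}]_(m1 + m2, n)) :
  evalmx (dsubmx A) mu = dsubmx (evalmx A mu).
Proof. exact: map_dsubmx. Qed.

Lemma fracmxM m n p (A : 'M[{poly F}]_(m, n)) (B : 'M_(n, p)) :
  fracmx (A *m B) = fracmx A *m fracmx B.
Proof. exact: map_mxM. Qed.

Lemma pi_eval mu k : (0 < k)%N -> (('X - mu%:P) ^+ k).[mu] = 0.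
Proof. by case: k => // k _; rewrite horner_exp hornerXsubC subrr expr0n. Qed.


Lemma pi_neq0 mu : ('X - mu%:P) != 0 :> {poly F}.
Proof. by rewrite polyXsubC_eq0. Qed.

Lemma scale_inj m n (a : {poly F}) (X Y : 'M[{poly F}]_(m, n)) :
  a != 0 -> a *: X = a *: Y -> X = Y.
Proof.
move=> a0 H; apply/matrixP=> i j.
have := congr1 (fun Z : 'M_(m,n) => Z i j) H; rewrite !mxE => /mulfI; exact.
Qed.

Lemma factor_mx mu m n (X : 'M[{poly F}]_(m, n)) :
  evalmx X mu = 0 -> exists Y, X = ('X - mu%:P) *: Y.
Proof.
move=> H; exists (map_mx (fun p => p %/ ('X - mu%:P)) X).
apply/matrixP=> i j; rewrite !mxE mulrC divpK //.
rewrite dvdp_XsubCl /root.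
by have := congr1 (fun Z : 'M_(m,n) => Z i j) H; rewrite !mxE => ->.
Qed.

Lemma div_mx mu a b c (M : 'M[{poly F}]_(a, b)) :
  row_full (evalmx M mu) ->
  forall k (X : 'M_(b, c)) W, M *m X = ('X - mu%:P) ^+ k *: W ->
  exists Y, X = ('X - mu%:P) ^+ k *: Y.
Proof.
move=> /row_fullP [Z HZ]; elim=> [|k IH] X W HX.
  by exists X; rewrite expr0 scale1r.
have HX0 : evalmx X mu = 0.
  have := congr1 (fun T => evalmx T mu) HX.
  rewrite evalmxM evalmxZ pi_eval // scale0r => H0.
  by rewrite -(mul1mx (evalmx X mu)) -HZ -mulmxA H0 mulmx0.
have [X1 HX1] := factor_mx HX0.
have : M *m X1 = ('X - mu%:P) ^+ k *: W.
  apply: (@scale_inj _ _ ('X - mu%:P)); first exact: pi_neq0.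
  by rewrite scalemxAr -HX1 HX scalerA -exprS.
move=> /IH [Y HY]; exists Y.
by rewrite HX1 HY scalerA -exprS.
Qed.

Lemma infdiv_mx mu m n (X : 'M[{poly F}]_(m, n)) :
  (forall k, exists Y, X = ('X - mu%:P) ^+ k *: Y) -> X = 0.
Proof.
move=> H; apply/matrixP=> i j; rewrite [RHS]mxE; case: (eqVneq (X i j) 0) => // Hx; exfalso.
set k := size (X i j).
have [Y HY] := H k.
have Hd : ('X - mu%:P) ^+ k %| X i j.
  by rewrite HY mxE dvdp_mulIl.
have := dvdp_leq Hx Hd; rewrite size_exp_XsubC.
by rewrite ltnn.
Qed.

Lemma exact_order mu m (i0 : 'I_m) : forall (k : nat) (W : 'cV[{poly F}]_m),
  W i0 ord0 != 0 -> (size (W i0 ord0) <= k)%N ->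
  exists e W', W = ('X - mu%:P) ^+ e *: W' /\ evalmx W' mu != 0.
Proof.
elim=> [|k IH] W HW Hs.
  by move: Hs; rewrite leqn0 size_poly_eq0 (negbTE HW).
case: (eqVneq (evalmx W mu) 0) => H0; last first.
  by exists 0%N, W; rewrite expr0 scale1r.
have [W1 HW1] := factor_mx H0.
have HW1i : W1 i0 ord0 != 0.
  by apply: contraNneq HW; rewrite HW1 mxE => ->; rewrite mulr0.
have Hs1 : (size (W1 i0 ord0) <= k)%N.
  move: Hs; rewrite HW1 mxE size_mul ?pi_neq0 // size_XsubC.
  by rewrite add2n.
have [e [W' [HW' HW'0]]] := IH W1 HW1i Hs1.
by exists e.+1, W'; split=> //; rewrite HW1 HW' scalerA -exprS.
Qed.

Lemma exact_order0 mu m (W : 'cV[{poly F}]_m) : W != 0 ->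
  exists e W', W = ('X - mu%:P) ^+ e *: W' /\ evalmx W' mu != 0.
Proof.
move=> HW.
have [i0 Hi0] : exists i0, W i0 ord0 != 0.
  apply/existsP; apply: contraNT HW => /existsPn Hn.
  by apply/eqP/matrixP=> i j; rewrite (ord1 j) mxE; apply/eqP/negPn/Hn.
exact: (@exact_order mu m i0 _ W Hi0 (leqnn _)).
Qed.

Lemma adj_inj n c (M : 'M[{poly F}]_n) (X : 'M_(n, c)) :
  \det M != 0 -> M *m X = 0 -> X = 0.
Proof.
move=> Hd H.
have : (\det M) *: X = 0 by rewrite -mul_scalar_mx -mul_adj_mx -mulmxA H mulmx0.
move=> H2; apply/matrixP=> i j.
have := congr1 (fun Z : 'M_(n,c) => Z i j) H2; rewrite !mxE => /eqP.
by rewrite mulf_eq0 (negbTE Hd) /= => /eqP.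
Qed.

Lemma frac_full mu n c (Y : 'M[{poly F}]_(n, c)) :
  row_full (evalmx Y mu) -> row_full (fracmx Y).
Proof.
move=> /row_fullP [Z HZ].
set Zp := map_mx polyC Z.
have Hd : \det (Zp *m Y) != 0.
  apply: contra_neq (@oner_neq0 F) => H.
  have := congr1 (fun p => p.[mu]) H.
  rewrite horner0 -[LHS]/(horner_eval mu _) -det_map_mx.
  by rewrite [map_mx _ _](evalmxM mu) evalmxC HZ det1.
have Hu : fracmx (Zp *m Y) \in unitmx.
  rewrite unitmxE unitfE /fracmx det_map_mx tofrac_eq0 //.
have := mxrank_unit Hu; rewrite fracmxM => Hr.
rewrite /row_full; apply/eqP/anti_leq; rewrite rank_leq_col /=.
by rewrite -{1}Hr mxrankM_maxr.
Qed.

Lemma ker_rank m n c (P : 'M[{poly F}]_(m, n)) (Y : 'M_(n, c)) :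
  P *m Y = 0 -> (\rank (fracmx Y) <= n - nrank P)%N.
Proof.
move=> H; rewrite /nrank -mxrank_tr -(mxrank_tr (fracmx P)) -mxrank_ker.
apply: mxrankS; apply/sub_kermxP.
by rewrite -trmx_mul -fracmxM H /fracmx map_mx0 trmx0.
Qed.

End Basics.
Section LinAlg.
Variable K : fieldType.

Lemma mx_col_eq0 m n (M : 'M[K]_(m, n)) : (forall j, col j M = 0) -> M = 0.
Proof.
move=> H; apply/matrixP=> i j.
by have := congr1 (fun X : 'M_(m,1) => X i 0) (H j); rewrite !mxE.
Qed.

Lemma fullcolP m n (M : 'M[K]_(m, n)) :
  row_full M <-> (forall c : 'cV_n, M *m c = 0 -> c = 0).
Proof.
split.
  move/row_fullP=> [X HX] c Hc.
  by rewrite -(mul1mx c) -HX -mulmxA Hc mulmx0.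
move=> H; apply/negPn/negP => Hnf.
have Hr : (0 < \rank (cokermx M))%N.
  rewrite mxrank_coker subn_gt0.
  by move: Hnf; rewrite /row_full ltn_neqAle rank_leq_col andbT.
case: (pickP (fun j => col j (cokermx M) != 0)) => [j Hj | Hc]; last first.
  have H0 : cokermx M = 0 by apply: mx_col_eq0 => j; apply/eqP; move: (Hc j) => /negbFE.
  by move: Hr; rewrite H0 mxrank0.
move/eqP: Hj; apply; apply: H.
by rewrite colE mulmxA mulmx_coker mul0mx.
Qed.

Lemma rank_rowA m n1 n2 n3 (A : 'M[K]_(m, n1)) (B : 'M_(m, n2)) (C : 'M_(m, n3)) :
  \rank (row_mx (row_mx A B) C) = \rank (row_mx A (row_mx B C)).
Proof.
rewrite -mxrank_tr -[in RHS]mxrank_tr !tr_row_mx.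
rewrite -!addsmxE -(adds_eqmx (addsmxE A^T B^T) (eqmx_refl C^T)) -(adds_eqmx (eqmx_refl A^T) (addsmxE B^T C^T)).
by rewrite addsmxA.
Qed.

End LinAlg.
Section MB.
Variable F : fieldType.
Local Notation tf := (@FracField.tofrac [the idomainType of {poly F}]).

Lemma mxp_col_eq0 (R : pzRingType) m n (M : 'M[R]_(m, n)) : (forall j, col j M = 0) -> M = 0.
Proof.
move=> H; apply/matrixP=> i j.
by have := congr1 (fun X : 'M_(m,1) => X i 0) (H j); rewrite !mxE.
Qed.

Lemma mb_full mu m n p (P : 'M[{poly F}]_(m, n)) (N : 'M_(n, p)) :
  right_minimal_basis P N -> row_full (evalmx N mu).
Proof.
move=> [[HPN HrN Hp] Hmin].
have HfN : row_full (fracmx N) by rewrite /row_full -/(nrank N) HrN.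
apply/fullcolP => c Hc; case: (eqVneq c 0) => // cn0; exfalso.
set cp := map_mx polyC c.
set w := N *m cp.
have Hw0 : evalmx w mu = 0 by rewrite /w evalmxM evalmxC.
have wn0 : w != 0.
  apply/eqP => w0; move/eqP: cn0; apply.
  have : fracmx N *m fracmx cp = 0 by rewrite -fracmxM -/w w0 /fracmx map_mx0.
  move/(fullcolP (fracmx N)).1: HfN => H /H H0.
  apply/matrixP=> i j; have := congr1 (fun Z : 'M_(p,1) => Z i j) H0.
  by rewrite !mxE => /eqP; rewrite tofrac_eq0 polyC_eq0 => /eqP.
have [w' Hw'] := factor_mx Hw0.
have [jj Hjj] : exists jj, c jj ord0 != 0.
  apply/existsP; apply: contraNT cn0 => /existsPn Hn.
  by apply/eqP/matrixP=> i j; rewrite (ord1 j) mxE; apply/eqP/negPn/Hn.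
pose D j := \max_(i < n) size (N i j).
have [j0 Pj0 Hmax] : exists2 j0, c j0 ord0 != 0 & forall j, c j ord0 != 0 -> (D j <= D j0)%N.
  by case: (@arg_maxnP _ jj (fun j => c j ord0 != 0) D Hjj) => j Pj Hj; exists j.
have Hsw : forall i, (size (w i ord0) <= D j0)%N.
  move=> i; rewrite /w mxE; apply: leq_trans (size_sum _ _ _) _.
  apply/bigmax_leqP => j _; rewrite mxE.
  case: (eqVneq (c j ord0) 0) => [->|cj]; first by rewrite mulr0 size_poly0.
  rewrite mulrC mul_polyC size_scale //.
  apply: leq_trans (Hmax j cj); rewrite /D; exact: (@leq_bigmax _ (fun i => size (N i j)) i).
have Hsw' : forall i, (size (w' i ord0) <= (D j0).-1)%N.
  move=> i; have := Hsw i; rewrite Hw' mxE.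
  case: (eqVneq (w' i ord0) 0) => [->|h]; first by rewrite size_poly0.
  rewrite size_mul ?pi_neq0 // size_XsubC add2n /=.
  by case: (D j0).
case: (leqP (D j0) 1) => HD.
  move/eqP: wn0; apply; apply/matrixP => i j; rewrite (ord1 j) [RHS]mxE.
  have hx := size1_polyC (leq_trans (Hsw i) HD).
  have he : (w i ord0).[mu] = 0.
    by have := congr1 (fun Z : 'M_(n,1) => Z i ord0) Hw0; rewrite !mxE.
  by rewrite hx in he; rewrite hornerC in he; rewrite hx he.
pose N' := \matrix_(i, j) if j == j0 then w' i ord0 else N i j.
have HcolN' : forall j, col j N' = if j == j0 then w' else col j N.
  move=> j; apply/matrixP => i k; rewrite (ord1 k) !mxE.
  by case: (j == j0); rewrite ?mxE.
have HPN' : P *m N' = 0.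
  apply: mxp_col_eq0 => j; rewrite colE -mulmxA -colE HcolN'.
  case: eqP => _; last by rewrite colE mulmxA HPN mul0mx.
  apply: (@scale_inj _ _ _ ('X - mu%:P)); first exact: pi_neq0.
  by rewrite scalemxAr -Hw' /w mulmxA HPN mul0mx scaler0.
pose t0 := tf (c j0 ord0)%:P.
have t0n0 : t0 != 0 by rewrite tofrac_eq0 polyC_eq0.
pose G : 'M[{fraction {poly F}}]_p := \matrix_(k, j) if j == j0 then
    (if k == j0 then tf ('X - mu%:P) / t0 else - tf (c k ord0)%:P / t0) else (k == j)%:R.
have HG : fracmx N' *m G = fracmx N.
  apply/matrixP => i j; rewrite !mxE.
  case: (eqVneq j j0) => [->|hj].
    rewrite (bigD1 j0) //= !mxE !eqxx /=.
    have Hwi : tf (w' i ord0) * tf ('X - mu%:P) = tf (N i j0) * t0 +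
        \sum_(k | k != j0) tf (N i k) * tf (c k ord0)%:P.
      rewrite -tofracM mulrC.
      have -> : ('X - mu%:P) * w' i ord0 = w i ord0 by rewrite Hw' mxE.
      rewrite /w mxE (bigD1 j0) //= rmorphD /= rmorphM /= mxE rmorph_sum /=.
      by congr (_ + _); apply: eq_bigr => k _; rewrite rmorphM /= mxE.
    have -> : \sum_(k | k != j0) fracmx N' i k * G k j0 =
        - (\sum_(k | k != j0) tf (N i k) * tf (c k ord0)%:P) / t0.
      rewrite mulNr mulr_suml -sumrN; apply: eq_bigr => k hk.
      by rewrite !mxE eqxx (negbTE hk) mulNr mulrN mulrA.
    rewrite mulrA Hwi mulrDl mulfK // -addrA mulNr subrr addr0.
    by [].
  rewrite (bigD1 j) //= !mxE (negbTE hj) eqxx mulr1 big1 ?addr0 //.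
  move=> k hk; rewrite !mxE (negbTE hj).
  by rewrite (negbTE hk) mulr0.
have HrN' : nrank N' = p.
  apply/anti_leq; rewrite /nrank rank_leq_col /=.
  have := mxrankM_maxl (fracmx N') G; rewrite HG.
  by rewrite -/(nrank N) HrN.
have Hsum : (\sum_(j < p) coldeg N' j < \sum_(j < p) coldeg N j)%N.
  rewrite (bigD1 j0) //= [X in (_ < X)%N](bigD1 j0) //=.
  have -> : \sum_(j < p | j != j0) coldeg N' j = \sum_(j < p | j != j0) coldeg N j.
    apply: eq_bigr => j hj; rewrite /coldeg; congr (_.-1).
    by apply: eq_bigr => i _; rewrite mxE (negbTE hj).
  rewrite ltn_add2r /coldeg -/(D j0).
  have : (\max_(i < n) size (N' i j0) <= (D j0).-1)%N.
    by apply/bigmax_leqP => i _; rewrite mxE eqxx; exact: Hsw'.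
  move: HD; case: (D j0) => [|[|d]] // _.
  case: (\max_(i < n) size (N' i j0)) => [|x] //=.
have := Hmin N' (And3 HPN' HrN' Hp).
by rewrite leqNgt Hsum.
Qed.
End MB.

Lemma Lmul (R : pzRingType) m1 n1 n2 m3 n3 c (Ll : 'M[R]_(m1, n1)) (A : 'M_(m1, n2))
  (B : 'M_(m1, n3)) (Rm : 'M_n2) (Cm : 'M_(n2, n3)) (Lr : 'M_(m3, n3))
  (a : 'M_(n1, c)) (b : 'M_(n2, c)) (d : 'M_(n3, c)) :
  block_mx Ll (row_mx A B) 0 (block_mx Rm Cm 0 Lr) *m col_mx a (col_mx b d) =
  col_mx (Ll *m a + A *m b + B *m d) (col_mx (Rm *m b + Cm *m d) (Lr *m d)).
Proof. by rewrite mul_block_col mul_row_col mul0mx add0r mul_block_col mul0mx add0r addrA. Qed.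

Lemma usub_row (R : Type) a b c1 c2 (A : 'M[R]_(a + b, c1)) (B : 'M_(a + b, c2)) :
  usubmx (row_mx A B) = row_mx (usubmx A) (usubmx B).
Proof. by rewrite -[A]vsubmxK -[B]vsubmxK -block_mxEh block_mxEv !col_mxKu. Qed.
Lemma dsub_row (R : Type) a b c1 c2 (A : 'M[R]_(a + b, c1)) (B : 'M_(a + b, c2)) :
  dsubmx (row_mx A B) = row_mx (dsubmx A) (dsubmx B).
Proof. by rewrite -[A]vsubmxK -[B]vsubmxK -block_mxEh block_mxEv !col_mxKd. Qed.

Lemma full_col1 (K : fieldType) m (v : 'cV[K]_m) : row_full v = (v != 0).
Proof.
rewrite /row_full -mxrank_eq0; have := rank_leq_col v.
by case: (\rank v) => [|[|]].
Qed.

Lemma prefix_full (K : fieldType) m s t (W : 'M[K]_(m, s)) (H : (t <= s)%N) :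
  row_full W -> row_full (\matrix_(a < m, b < t) W a (widen_ord H b)).
Proof.
move=> HW; pose S : 'M[K]_(s, t) := \matrix_(k, b) (k == widen_ord H b)%:R.
have HWS : W *m S = \matrix_(a < m, b < t) W a (widen_ord H b).
  apply/matrixP => a b; rewrite !mxE (bigD1 (widen_ord H b)) //= mxE eqxx mulr1 big1 ?addr0 //.
  by move=> k hk; rewrite mxE (negbTE hk) mulr0.
have HSS : S^T *m S = 1%:M.
  apply/matrixP => b b'; rewrite !mxE (bigD1 (widen_ord H b)) //= !mxE eqxx mul1r big1 ?addr0.
    congr (_%:R); apply/eqP/eqP => [/(congr1 val) /= h|->] //.
  by move=> k hk; rewrite !mxE (negbTE hk) mul0r.
apply/fullcolP => c; rewrite -HWS -mulmxA => /((fullcolP W).1 HW) HS0.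
by rewrite -(mul1mx c) -HSS -mulmxA HS0 mulmx0.
Qed.

Section Main.
Variable F : fieldType.
Variable mu : F.
Variables (m1 n1 n2 m3 n3 : nat) (Ll : 'M[{poly F}]_(m1, n1)) (A : 'M[{poly F}]_(m1, n2))
  (B : 'M[{poly F}]_(m1, n3)) (Rm : 'M[{poly F}]_n2)
  (Cm : 'M[{poly F}]_(n2, n3)) (Lr : 'M[{poly F}]_(m3, n3))
  (pL : nat) (NL : 'M[{poly F}]_(n1 + (n2 + n3), pL)) (X : 'M[{poly F}]_(n1, m1)).
Local Notation L := (block_mx Ll (row_mx A B) 0 (block_mx Rm Cm 0 Lr)).
Local Notation pi := ('X - mu%:P).
Hypothesis HX : Ll *m X = 1%:M.
Hypothesis HLr : row_full (evalmx Lr mu).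
Hypothesis HRm : \det Rm != 0.
Hypothesis HNL : right_minimal_basis L NL.

Local Notation n := (n1 + (n2 + n3))%N.
Local Notation E := (evalmx NL mu).
Local Notation E1 := (evalmx (usubmx NL) mu).

Lemma NL_low : dsubmx NL = 0.
Proof.
case: HNL => [[H _ _] _].
have eNL : NL = col_mx (usubmx NL) (col_mx (usubmx (dsubmx NL)) (dsubmx (dsubmx NL))) by rewrite !vsubmxK.
rewrite eNL Lmul in H; move/eqP: H; rewrite !col_mx_eq0 => /andP [_ /andP [H2 H3]].
have Hc : dsubmx (dsubmx NL) = 0.
  apply: (@infdiv_mx _ mu) => k; apply: (@div_mx _ _ _ _ _ _ HLr k _ 0).
  by rewrite scaler0; apply/eqP.
rewrite Hc mulmx0 addr0 in H2.
have Hb : usubmx (dsubmx NL) = 0 by apply: adj_inj HRm (eqP H2).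
by rewrite -[dsubmx NL]vsubmxK Hb Hc col_mx0.
Qed.

Lemma E_eq : E = col_mx E1 0.
Proof. by rewrite -[NL]vsubmxK NL_low evalmx_col col_mxKu evalmx0. Qed.

Lemma Efull : row_full E.
Proof. exact: mb_full HNL. Qed.

Lemma E1full : row_full E1.
Proof.
apply/fullcolP => a Ha; move/fullcolP: Efull; apply.
by rewrite E_eq mul_col_mx Ha mul0mx col_mx0.
Qed.

Lemma span_ker (z : 'cV[F]_n1) : evalmx Ll mu *m z = 0 -> exists a, E1 *m a = z.
Proof.
move=> Hz; apply: NNPP => Hn.
set zp := map_mx polyC z.
have [wv Hwv] : exists wv, Ll *m zp = pi *: wv.
  by apply: factor_mx; rewrite evalmxM evalmxC.
set y := zp - pi *: (X *m wv).
have Hy : Ll *m y = 0.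
  by rewrite /y mulmxDr mulmxN -scalemxAr mulmxA HX mul1mx Hwv subrr.
set Y := row_mx NL (col_mx y (col_mx (0 : 'cV_n2) (0 : 'cV_n3))).
have HLY : L *m Y = 0.
  rewrite mul_mx_row Lmul !mulmx0 !addr0 Hy col_mx0 col_mx0.
  by case: HNL => [[-> _ _] _]; rewrite row_mx0.
have HYf : row_full (evalmx Y mu).
  rewrite /Y evalmx_row !evalmx_col !evalmx0 col_mx0.
  have -> : evalmx y mu = z.
    by rewrite /y evalmxD evalmxN evalmxZ hornerXsubC subrr scale0r subr0 evalmxC.
  apply/fullcolP => c; rewrite -[c]vsubmxK mul_row_col E_eq mul_col_mx mul0mx.
  rewrite mul_col_mx mul0mx add_col_mx addr0 => /eqP; rewrite col_mx_eq0 eqxx andbT => /eqP H.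
  set be := (dsubmx c) 0 0.
  have Hzc : z *m dsubmx c = be *: z.
    apply/matrixP => i j; rewrite (ord1 j) !mxE big_ord1 mulrC.
    by rewrite /be; congr (_ * _); rewrite (ord1 i).
  case: (eqVneq be 0) => hb.
    have Hd : dsubmx c = 0.
      by apply/matrixP => i j; rewrite (ord1 i) (ord1 j) [RHS]mxE; exact: hb.
    rewrite Hd mulmx0 addr0 in H.
    by rewrite Hd; move/fullcolP: E1full => /(_ _ H) ->; rewrite col_mx0.
  exfalso; apply: Hn; exists (- be^-1 *: usubmx c).
  apply: (@scalerI _ _ be) => //.
  rewrite -scalemxAr scalerA mulrN mulfV // scaleN1r.
  by rewrite -Hzc; apply/eqP; rewrite eq_sym -addr_eq0 addrC H.
have := ker_rank HLY.
case: HNL => [[_ _ Hp] _]; rewrite -Hp.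
by move/frac_full: HYf; rewrite /row_full => /eqP ->; rewrite addn1 ltnn.
Qed.


Lemma evalL : evalmx L mu = block_mx (evalmx Ll mu) (row_mx (evalmx A mu) (evalmx B mu)) 0
   (block_mx (evalmx Rm mu) (evalmx Cm mu) 0 (evalmx Lr mu)).
Proof. by rewrite !evalmx_block evalmx_row !evalmx0. Qed.

Lemma split3 (T : Type) a b d c (Y : 'M[T]_(a + (b + d), c)) :
  Y = col_mx (usubmx Y) (col_mx (usubmx (dsubmx Y)) (dsubmx (dsubmx Y))).
Proof. by rewrite !vsubmxK. Qed.

Lemma Lr_inj c (Y : 'M[F]_(n3, c)) : evalmx Lr mu *m Y = 0 -> Y = 0.
Proof.
move: HLr => /row_fullP [Z HZ] H.
by rewrite -(mul1mx Y) -HZ -mulmxA H mulmx0.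
Qed.

Lemma G_fwd c (Y : 'M[F]_(n, c)) : evalmx L mu *m Y = 0 ->
  row_full (row_mx E Y) -> row_full (usubmx (dsubmx Y)).
Proof.
move=> HLY Hf; apply/fullcolP => b Hb.
rewrite evalL (split3 Y) Lmul in HLY.
move/eqP: HLY; rewrite !col_mx_eq0 => /andP [/eqP H1 /andP [_ /eqP H3]].
have Y3 := Lr_inj H3; rewrite Y3 mulmx0 addr0 in H1.
have [a Ha] : exists a, E1 *m a = usubmx Y *m b.
  apply: span_ker; rewrite mulmxA.
  have -> : evalmx Ll mu *m usubmx Y = - (evalmx A mu *m usubmx (dsubmx Y)).
    by apply/eqP; rewrite -addr_eq0 H1.
  by rewrite mulNmx -mulmxA Hb mulmx0 oppr0.
have : row_mx E Y *m col_mx (- a) b = 0.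
  rewrite mul_row_col E_eq (split3 Y) Y3 !mul_col_mx Hb !mul0mx col_mx0.
  by rewrite add_col_mx addr0 mulmxN Ha addNr col_mx0.
move/fullcolP: Hf => Hf /Hf /eqP; rewrite col_mx_eq0 => /andP [_ /eqP] //.
Qed.

Lemma G_bwd c (Y : 'M[F]_(n, c)) : row_full (usubmx (dsubmx Y)) -> row_full (row_mx E Y).
Proof.
move=> Hf; apply/fullcolP => v; rewrite -[v]vsubmxK mul_row_col E_eq (split3 Y).
rewrite !mul_col_mx mul0mx -[0 : 'M_(n2 + n3, 1)]col_mx0 !add_col_mx => /eqP.
rewrite !col_mx_eq0 => /and3P [/eqP H1 /eqP H2 _].
rewrite add0r in H2; move/fullcolP: Hf => /(_ _ H2) Hb.
rewrite Hb mulmx0 addr0 in H1; move/fullcolP: E1full => /(_ _ H1) ->.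
by rewrite Hb col_mx0.
Qed.

Definition Rroot (b : 'cV[{poly F}]_n2) k := [/\ (0 < k)%N, evalmx b mu != 0 &
  exists2 v, Rm *m b = pi ^+ k *: v & evalmx v mu != 0].

Definition liftv (b : 'cV[{poly F}]_n2) : 'cV[{poly F}]_n := col_mx (- (X *m (A *m b))) (col_mx b 0).

Lemma lift2 b : usubmx (dsubmx (liftv b)) = b.
Proof. by rewrite col_mxKd col_mxKu. Qed.

Lemma Llift b : L *m liftv b = col_mx 0 (col_mx (Rm *m b) 0).
Proof.
rewrite Lmul !mulmx0 !addr0 mulmxN [Ll *m _]mulmxA HX mul1mx.
by rewrite addNr.
Qed.

Lemma eval_x2 c (Y : 'M[{poly F}]_(n, c)) : evalmx (usubmx (dsubmx Y)) mu = usubmx (dsubmx (evalmx Y mu)).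
Proof. by rewrite evalmx_usub evalmx_dsub. Qed.

Lemma neq0_x2 a b d c (Y : 'M[F]_(a + (b + d), c)) : usubmx (dsubmx Y) != 0 -> Y != 0.
Proof. by apply: contraNneq => ->; rewrite linear0 linear0. Qed.

Lemma RtoL b k : Rroot b k -> root_poly L NL mu (liftv b) k.
Proof.
case=> k0 hb [v Hv hv]; split => //.
- by apply: neq0_x2; rewrite -eval_x2 lift2.
- exists (col_mx 0 (col_mx v 0)); first by rewrite Llift Hv !scale_col_mx !scaler0.
  by apply: neq0_x2; rewrite -evalmx_dsub -evalmx_usub col_mxKd col_mxKu.
- have := @G_bwd 1 (evalmx (liftv b) mu); rewrite -eval_x2 lift2 full_col1 => /(_ hb) /eqP //.
Qed.

Lemma Lroot_eval x k : root_poly L NL mu x k -> evalmx L mu *m evalmx x mu = 0.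
Proof.
case=> k0 _ [v Hv _] _.
by rewrite -evalmxM Hv evalmxZ pi_eval // scale0r.
Qed.

Lemma LtoR x k : root_poly L NL mu x k -> exists2 k2, (k <= k2)%N & Rroot (usubmx (dsubmx x)) k2.
Proof.
move=> Hx; have HLx := Lroot_eval Hx.
case: Hx => k0 _ [w Hw _] /eqP Hr.
have Hx2 : evalmx (usubmx (dsubmx x)) mu != 0.
  by rewrite eval_x2 -full_col1; apply: G_fwd HLx Hr.
move: Hw; rewrite {1}(split3 x) Lmul (split3 w) !scale_col_mx => /eq_col_mx [_ /eq_col_mx [H2 H3]].
have [y3 Hy3] := div_mx HLr H3.
rewrite Hy3 -scalemxAr in H2.
have H2' : Rm *m usubmx (dsubmx x) = pi ^+ k *: (usubmx (dsubmx w) - Cm *m y3).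
  by rewrite scalerBr -H2 addrK.
set z := usubmx (dsubmx w) - Cm *m y3 in H2'.
have zn0 : z != 0.
  apply: contraNneq Hx2 => z0; rewrite z0 scaler0 in H2'.
  by rewrite (adj_inj HRm H2') evalmx0.
have [e [z' [Hz' hz']]] := exact_order0 mu zn0.
exists (k + e)%N; first exact: leq_addr.
split => //; first by rewrite (leq_trans k0) // leq_addr.
by exists z' => //; rewrite H2' Hz' scalerA -exprD.
Qed.

Lemma LtoR_ex x k : root_poly L NL mu x k -> exists k2, (k <= k2)%N /\ Rroot (usubmx (dsubmx x)) k2.
Proof. by case/LtoR => k2 h1 h2; exists k2. Qed.

Lemma eq_evalcols s d (r r' : 'I_s -> 'cV[{poly F}]_d) :
  (forall i, evalmx (r i) mu = evalmx (r' i) mu) -> evalmx (colsmx r) mu = evalmx (colsmx r') mu.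
Proof.
move=> H; apply/matrixP => a b.
by have := congr1 (fun M : 'cV_d => M a ord0) (H b); rewrite !mxE.
Qed.

Lemma col_evalcols s d (r : 'I_s -> 'cV[{poly F}]_d) j :
  col j (evalmx (colsmx r) mu) = evalmx (r j) mu.
Proof. by apply/matrixP => a b; rewrite (ord1 b) !mxE. Qed.

Lemma x2_cols s (r : 'I_s -> 'cV[{poly F}]_n) :
  usubmx (dsubmx (evalmx (colsmx r) mu)) = evalmx (colsmx (fun i => usubmx (dsubmx (r i)))) mu.
Proof. by apply/matrixP => a b; rewrite !mxE. Qed.

Lemma Lcols s (q : 'I_s -> 'cV[{poly F}]_n) k :
  (forall i, root_poly L NL mu (q i) (k i)) -> evalmx L mu *m evalmx (colsmx q) mu = 0.
Proof.
move=> H; apply: mx_col_eq0 => j; rewrite colE -mulmxA -colE col_evalcols.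
exact: Lroot_eval (H j).
Qed.

Lemma full3 j (P : 'M[F]_(n, j)) (y : 'cV_n) :
  (\rank (row_mx (row_mx E P) y) = (pL + j + 1)%N) <-> row_full (row_mx E (row_mx P y)).
Proof. by rewrite /row_full rank_rowA -addnA; split => [->|/eqP]. Qed.

Definition Rmax s (v : 'I_s -> 'cV[{poly F}]_n2) (l : 'I_s -> nat) :=
 [/\ (forall i, Rroot (v i) (l i)) /\ row_full (evalmx (colsmx v) mu),
   (forall t (r : 'I_t -> 'cV[{poly F}]_n2) (k : 'I_t -> nat), (forall i, Rroot (r i) (k i)) ->
       row_full (evalmx (colsmx r) mu) -> (t <= s)%N),
   (forall i j : 'I_s, (i <= j)%N -> (l j <= l i)%N) &
   (forall (j : 'I_s) x kx, Rroot x kx -> (l j < kx)%N ->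
      ~ row_full (row_mx (evalmx (colsmx (fun l0 : 'I_j => v (widen_ord (ltnW (ltn_ord j)) l0))) mu)
                         (evalmx x mu)))].

Lemma fwd s (v : 'I_s -> 'cV[{poly F}]_n2) (l : 'I_s -> nat) :
  Rmax v l -> maximal_set L NL mu (fun i => liftv (v i)) l.
Proof.
case=> [[Hv HV] Hc Hd Hm]; split => //.
  split.
    split; first by move=> i; apply: RtoL.
    apply/eqP; apply: G_bwd; rewrite x2_cols.
    by rewrite (@eq_evalcols _ _ _ v) // => i; rewrite lift2.
  move=> t r' k' [Hr' /eqP Hind].
  pose k2 i := proj1_sig (constructive_indefinite_description _ (LtoR_ex (Hr' i))).
  have Hk2 : forall i, Rroot (usubmx (dsubmx (r' i))) (k2 i).
    by move=> i; case: (proj2_sig (constructive_indefinite_description _ (LtoR_ex (Hr' i)))).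
  apply: (Hc _ _ _ Hk2); rewrite -x2_cols.
  exact: G_fwd (Lcols Hr') Hind.
move=> j x kx Hx Hlt /full3 Hf.
have HLY : evalmx L mu *m row_mx (evalmx (colsmx (fun l0 : 'I_j =>
     liftv (v (widen_ord (ltnW (ltn_ord j)) l0)))) mu) (evalmx x mu) = 0.
  rewrite mul_mx_row (Lcols (k := fun l0 : 'I_j => l (widen_ord (ltnW (ltn_ord j)) l0))).
    by rewrite (Lroot_eval Hx) row_mx0.
  by move=> i; apply: RtoL.
have := G_fwd HLY Hf; rewrite dsub_row usub_row x2_cols.
rewrite (@eq_evalcols _ _ _ (fun l0 : 'I_j => v (widen_ord (ltnW (ltn_ord j)) l0))); last first.
  by move=> i; rewrite lift2.
case: (LtoR Hx) => k2 hk2 HR.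
rewrite -eval_x2; apply: Hm HR _.
exact: leq_trans Hlt hk2.
Qed.

Lemma x2_q (a : 'cV[{poly F}]_n1) (b : 'cV_n2) c (R : 'cV_n) :
  usubmx (dsubmx (col_mx a (col_mx b 0) + c *: R)) = b + c *: usubmx (dsubmx R).
Proof. by rewrite (split3 R) !scale_col_mx !add_col_mx !col_mxKd !col_mxKu. Qed.

Lemma prefix_eq s (v : 'I_s -> 'cV[{poly F}]_n2) (i : 'I_s) (H : (i + 1 <= s)%N) :
  row_mx (evalmx (colsmx (fun l0 : 'I_i => v (widen_ord (ltnW (ltn_ord i)) l0))) mu) (evalmx (v i) mu)
  = \matrix_(a < n2, b < i + 1) (evalmx (colsmx v) mu) a (widen_ord H b).
Proof.
apply/matrixP => a b; rewrite !mxE; case: splitP => k hk; rewrite !mxE.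
  by do 3 f_equal; apply: val_inj; rewrite /= hk.
  have k0 : (k : nat) = 0%N by rewrite (ord1 k). rewrite k0 addn0 in hk. have hw : widen_ord H b = i by apply: val_inj; exact: hk. rewrite hw; move: k hk k0 => k _ _; by rewrite (ord1 k).
Qed.

Lemma bwd s (v : 'I_s -> 'cV[{poly F}]_n2) (l : 'I_s -> nat) u r :
  maximal_set L NL mu (fun i => col_mx (u i) (col_mx (v i) 0) + pi ^+ (l i) *: r i) l -> Rmax v l.
Proof.
set q := (fun i => _).
case=> [[[Hq /eqP Hind] Hc] Hd Hm].
have l0 i : (0 < l i)%N by case: (Hq i).
have Hqx2 i : evalmx (usubmx (dsubmx (q i))) mu = evalmx (v i) mu.
  by rewrite /q x2_q evalmxD evalmxZ pi_eval // scale0r addr0.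
have HV : row_full (evalmx (colsmx v) mu).
  have := G_fwd (Lcols Hq) Hind; rewrite x2_cols.
  by rewrite (eq_evalcols Hqx2).
have Hvn0 i : evalmx (v i) mu != 0.
  rewrite -Hqx2 eval_x2 -full_col1; case: (Hq i) => _ _ _ /eqP Hr.
  exact: G_fwd (Lroot_eval (Hq i)) Hr.
have Hpre (i : 'I_s) (H : (i + 1 <= s)%N) : row_full (row_mx (evalmx (colsmx
    (fun l0 : 'I_i => v (widen_ord (ltnW (ltn_ord i)) l0))) mu) (evalmx (v i) mu)).
  by rewrite (prefix_eq v H); apply: prefix_full.
have Hfull3 (j : 'I_s) x : row_full (row_mx (evalmx (colsmx
    (fun l0 : 'I_j => v (widen_ord (ltnW (ltn_ord j)) l0))) mu) (evalmx x mu)) ->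
    \rank (row_mx (row_mx E (evalmx (colsmx (fun l0 : 'I_j => q (widen_ord (ltnW (ltn_ord j)) l0))) mu))
       (evalmx (liftv x) mu)) = (pL + j + 1)%N.
  move=> Hf; apply/full3; apply: G_bwd.
  rewrite dsub_row usub_row x2_cols -eval_x2 lift2.
  by rewrite (eq_evalcols (fun l0 => Hqx2 (widen_ord (ltnW (ltn_ord j)) l0))).
have Hv i : Rroot (v i) (l i).
  case: (LtoR (Hq i)) => k2 hk2 [_ _ [z' Hz' hz']].
  move: Hz'; rewrite /q x2_q mulmxDr -scalemxAr => Hz'.
  pose zz := pi ^+ (k2 - l i) *: z' - Rm *m usubmx (dsubmx (r i)).
  have HRv : Rm *m v i = pi ^+ l i *: zz.
    by rewrite /zz scalerBr scalerA -exprD subnKC // -Hz' addrK.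
  have zzn0 : zz != 0.
    apply: contraNneq (Hvn0 i) => z0; rewrite z0 scaler0 in HRv.
    by rewrite (adj_inj HRm HRv) evalmx0.
  have [e [zz' [Hzz hzz]]] := exact_order0 mu zzn0.
  case: e Hzz => [|e] Hzz.
    by split => //; exists zz' => //; rewrite HRv Hzz expr0 scale1r.
  exfalso; apply: (Hm i (liftv (v i)) (l i + e.+1)%N).
  - apply: RtoL; split => //; first by rewrite addnS.
    by exists zz' => //; rewrite HRv Hzz scalerA -exprD.
  - by rewrite addnS ltnS leq_addr.
  - by apply: Hfull3; apply: Hpre; rewrite addn1.
split => //.
- move=> t r' k' Hr' Hind'; apply: (Hc t (fun i => liftv (r' i)) k').
  split; first by move=> i; apply: RtoL.
  apply/eqP; apply: G_bwd; rewrite x2_cols.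
  by rewrite (@eq_evalcols _ _ _ r') // => i; rewrite lift2.
- move=> j x kx Hx Hlt Hf; apply: (Hm j (liftv x) kx (RtoL Hx) Hlt).
  exact: Hfull3.
Qed.

End Main.

Lemma Rroot_iff (F : fieldType) (mu : F) n2 (Rm : 'M[{poly F}]_n2) (NR : 'M_(n2, 0)) x k :
  root_poly Rm NR mu x k <-> Rroot mu Rm x k.
Proof.
split.
  by case=> a b c d; split.
case=> a b c; split => //; rewrite row_thin_mx; apply/eqP.
by rewrite -/(row_full _) full_col1.
Qed.

Lemma Rmax_equiv (F : fieldType) (mu : F) n2 (Rm : 'M[{poly F}]_n2) (NR : 'M_(n2, 0))
  s (v : 'I_s -> 'cV_n2) l :
  maximal_set Rm NR mu v l <-> Rmax mu Rm v l.
Proof.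
split.
  case=> [[[Hv Hind] Hc] Hd Hm]; split => //.
  - split; first by move=> i; apply/Rroot_iff; exact: Hv i.
    by move: Hind; rewrite /indep_at row_thin_mx => /eqP.
  - move=> t r k Hr Hi; apply: (Hc t r k); split.
      by move=> i; apply/Rroot_iff; exact: Hr i.
    by rewrite /indep_at row_thin_mx; apply/eqP; exact: Hi.
  - move=> j x kx Hx Hlt Hf; apply: (Hm j x kx) => //; first by apply/Rroot_iff.
    by rewrite row_thin_mx; apply/eqP; exact: Hf.
case=> [[Hv Hind] Hc Hd Hm]; split => //.
- split; first split.
  + by move=> i; apply/Rroot_iff; exact: Hv i.
  + by rewrite /indep_at row_thin_mx; apply/eqP; exact: Hind.
  + move=> t r k [Hr Hi]; apply: (Hc t r k).
      by move=> i; apply/Rroot_iff; exact: Hr i.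
    by move: Hi; rewrite /indep_at row_thin_mx => /eqP.
- move=> j x kx /Rroot_iff Hx Hlt; rewrite row_thin_mx => Hf.
  by apply: (Hm j x kx Hx Hlt); apply/eqP; exact: Hf.
Qed.

Theorem theorem5p6 (R : realType) (lam0 : R[i]) (m1 n1 n2 m3 n3 : nat)
  (Ll : 'M[{poly R[i]}]_(m1, n1)) (A : 'M[{poly R[i]}]_(m1, n2))
  (B : 'M[{poly R[i]}]_(m1, n3)) (Rm : 'M[{poly R[i]}]_n2)
  (Cm : 'M[{poly R[i]}]_(n2, n3)) (Lr : 'M[{poly R[i]}]_(m3, n3))
  (pL : nat) (NL : 'M[{poly R[i]}]_(n1 + (n2 + n3), pL))
  (pR : nat) (NR : 'M[{poly R[i]}]_(n2, pR)) :
  let L := block_mx Ll (row_mx A B) 0 (block_mx Rm Cm 0 Lr) in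
  is_pencil L ->
  right_invertible Ll ->
  ~ peigenvalue Lr lam0 ->
  nrank Lr = n3 ->
  pregular Rm ->
  (forall mu, peigenvalue Rm mu -> mu = lam0) ->
  right_minimal_basis L NL ->
  right_minimal_basis Rm NR ->
  forall (s : nat) (v : 'I_s -> 'cV[{poly R[i]}]_n2) (l : 'I_s -> nat),
    maximal_set Rm NR lam0 v l <->
    exists (u : 'I_s -> 'cV[{poly R[i]}]_n1) (r : 'I_s -> 'cV[{poly R[i]}]_(n1 + (n2 + n3))),
      maximal_set L NL lam0
        (fun i => col_mx (u i) (col_mx (v i) 0) + ('X - lam0%:P) ^+ (l i) *: r i) l.
Proof.
move=> L _ [X HX] Heig HnrLr Hreg _ HNL HNR s v l.
rewrite {}/L in HNL *.
have HLr : row_full (evalmx Lr lam0).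
  rewrite /peigenvalue HnrLr in Heig.
  apply/eqP/anti_leq; rewrite rank_leq_col /= leqNgt; apply/negP => h; exact: Heig h.
have HnR : nrank Rm = n2.
  rewrite /nrank mxrank_unit // unitmxE unitfE /fracmx det_map_mx tofrac_eq0.
  exact: Hreg.
have Hp0 : pR = 0%N by case: HNR => [[_ _ Hp] _]; rewrite Hp HnR subnn.
subst pR.
split.
  move/Rmax_equiv => HR.
  exists (fun i => - (X *m (A *m v i))), (fun i => 0).
  have -> : (fun i => col_mx (- (X *m (A *m v i))) (col_mx (v i) 0) + ('X - lam0%:P) ^+ l i *: 0)
      = (fun i => liftv n3 A X (v i)).
    by apply: functional_extensionality => i; rewrite scaler0 addr0.
  exact: fwd HX HLr Hreg HNL _ _ _ HR.
case=> u [r H]; apply/Rmax_equiv.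
exact: bwd HX HLr Hreg HNL _ _ _ _ _ H.
Qed.
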